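(* Let $G$ be a connected graph with $n\ge 2$ vertices and diameter $D$. Then $$EE(G) > e^{\sqrt[D]{n-1}} + (n-1) - \sqrt[D]{n-1}.$$
   Context: All graphs are finite, simple and undirected. For a graph $G$ with adjacency matrix $A(G)$ having eigenvalues $\lambda_1\ge\cdots\ge\lambda_n$, the Estrada index is $EE(G)=\sum_{i=1}^n e^{\lambda_i}$. The diameter $D$ is the maximum over all pairs of vertices of the length of a shortest path between them. *)

(* Defs.v *)
From HB Require Import structures.
From Stdlib Require Import Reals ClassicalEpsilon FunctionalExtensionality.
From mathcomp Require Import all_boot all_order all_algebra.
Set Implicit Arguments. Unset Strict Implicit. Unset Printing Implicit Defensive.

Definition R_eqb (x y : R) : bool := if Req_EM_T x y then true else false.
Lemma R_eqP : Equality.axiom R_eqb.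
Proof. by move=> x y; rewrite /R_eqb; destruct (Req_EM_T x y); constructor. Qed.
HB.instance Definition _ := hasDecEq.Build R R_eqP.

Definition R_find (P : pred R) (_ : nat) : option R :=
  match excluded_middle_informative (exists x, P x) with
  | left h => Some (proj1_sig (constructive_indefinite_description _ h))
  | right _ => None
  end.
Lemma R_find_correct P n x : R_find P n = Some x -> P x.
Proof.
rewrite /R_find; case: excluded_middle_informative => // h [<-].
exact: (proj2_sig (constructive_indefinite_description _ h)).
Qed.
Lemma R_find_complete (P : pred R) : (exists x, P x) -> exists n, R_find P n.
Proof. by move=> h; exists 0%N; rewrite /R_find; case: excluded_middle_informative. Qed.
Lemma R_find_ext (P Q : pred R) : P =1 Q -> R_find P =1 R_find Q.
Proof. by move=> /functional_extensionality ->. Qed.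
HB.instance Definition _ := hasChoice.Build R R_find_correct R_find_complete R_find_ext.

Lemma R_addA : associative Rplus. Proof. by move=> x y z; rewrite Rplus_assoc. Qed.
Lemma R_addC : commutative Rplus. Proof. exact: Rplus_comm. Qed.
Lemma R_add0 : left_id R0 Rplus. Proof. exact: Rplus_0_l. Qed.
Lemma R_addN : left_inverse R0 Ropp Rplus. Proof. exact: Rplus_opp_l. Qed.
HB.instance Definition _ := GRing.isZmodule.Build R R_addA R_addC R_add0 R_addN.

Lemma R_mulA : associative Rmult. Proof. by move=> x y z; rewrite Rmult_assoc. Qed.
Lemma R_mulC : commutative Rmult. Proof. exact: Rmult_comm. Qed.
Lemma R_mul1 : left_id R1 Rmult. Proof. exact: Rmult_1_l. Qed.
Lemma R_mulDl : left_distributive Rmult Rplus. Proof. by move=> x y z; rewrite Rmult_plus_distr_r. Qed.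
Lemma R_one_neq0 : R1 != R0. Proof. by apply/eqP; exact: R1_neq_R0. Qed.
HB.instance Definition _ :=
  GRing.Zmodule_isComNzRing.Build R R_mulA R_mulC R_mul1 R_mulDl R_one_neq0.

Definition R_inv (x : R) : R := if Req_EM_T x R0 then R0 else Rinv x.
Lemma R_mulVf (x : R) : x != 0%R -> (R_inv x * x)%R = 1%R.
Proof.
move=> /eqP hx; rewrite /R_inv; destruct (Req_EM_T x R0) as [h|h].
  by case: hx.
exact: Rinv_l.
Qed.
Lemma R_inv0 : R_inv 0%R = 0%R.
Proof. rewrite /R_inv; case: Req_EM_T => [//|h]; by case: h. Qed.
HB.instance Definition _ := GRing.ComNzRing_isField.Build R R_mulVf R_inv0.

Local Open Scope ring_scope.

Definition simple_graph (n : nat) (e : rel 'I_n) : Prop :=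
  (forall i j, e i j = e j i) /\ (forall i, e i i = false).

Definition connected_graph (n : nat) (e : rel 'I_n) : Prop :=
  forall i j, connect e i j.

Fixpoint walk_le (n : nat) (e : rel 'I_n) (k : nat) (i j : 'I_n) : bool :=
  match k with
  | 0 => i == j
  | k'.+1 => walk_le e k' i j || [exists l, e i l && walk_le e k' l j]
  end.

(* Distance: the least k < n with a walk of length <= k from i to j
   (shortest paths in a graph on n vertices have length <= n-1;
   returns n if j is unreachable from i). *)
Definition gdist (n : nat) (e : rel 'I_n) (i j : 'I_n) : nat :=
  find (fun k => walk_le e k i j) (iota 0 n).

Definition diameter (n : nat) (e : rel 'I_n) : nat :=
  \max_(i : 'I_n) \max_(j : 'I_n) gdist e i j.

Definition adjmx (n : nat) (e : rel 'I_n) : 'M[R]_n :=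
  \matrix_(i < n, j < n) (if e i j then 1 else 0).

(* lam is the list of all eigenvalues (with multiplicity) of the adjacency
   matrix: the characteristic polynomial splits as prod (X - lam_i). *)
Definition adj_spectrum (n : nat) (e : rel 'I_n) (lam : seq R) : Prop :=
  char_poly (adjmx e) = \prod_(x <- lam) ('X - x%:P).

Definition estrada (lam : seq R) : R := \sum_(x <- lam) exp x.

(* Main.v *)
Require Import Defs.
From HB Require Import structures.
From Stdlib Require Import Reals Lra Psatz.
From mathcomp Require Import all_boot all_order all_algebra zify.
Set Implicit Arguments. Unset Strict Implicit. Unset Printing Implicit Defensive.
Import GRing.Theory.

Section PA.
Local Open Scope ring_scope.
Variable F : fieldType.

Lemma pid1_mul_row n (P : 'M[F]_n.+1) :
  (pid_mx 1 : 'M_(1, n.+1)) *m P = row 0 P.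
Proof.
apply/rowP=> j; rewrite !mxE (bigD1 0) //= big1 ?addr0.
  by rewrite !mxE /= mul1r.
move=> k /negbTE kn0; rewrite !mxE.
have -> : (nat_of_ord (0 : 'I_1) == k :> nat) = false.
  by apply/negbTE; apply: contra (negbT kn0) => /eqP h; apply/eqP/val_inj; rewrite /= -h.
by rewrite mul0r.
Qed.

Lemma char_poly_conj n (P A : 'M[F]_n) : P \in unitmx ->
  char_poly (P *m A *m invmx P) = char_poly A.
Proof.
move=> Pu; rewrite /char_poly /char_poly_mx.
have h1 : map_mx polyC P *m map_mx polyC (invmx P) = 1%:M.
  by rewrite -map_mxM mulmxV // map_mx1.
have -> : 'X%:M - map_mx polyC (P *m A *m invmx P) =
   map_mx polyC P *m ('X%:M - map_mx polyC A) *m map_mx polyC (invmx P).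
  rewrite mulmxBr mulmxBl !map_mxM mul_mx_scalar -scalemxAl h1 scalemx1.
  done.
rewrite !det_mulmx !det_map_mx mulrC mulrA -rmorphM.
by rewrite -det_mulmx mulVmx // det1 rmorph1 mul1r.
Qed.

Lemma char_poly_lblock n (a : F) (C : 'M[F]_(n, 1)) (B : 'M[F]_n) :
  char_poly (block_mx a%:M 0 C B : 'M_(1 + n)) = ('X - a%:P) * char_poly B.
Proof.
rewrite /char_poly /char_poly_mx map_block_mx map_mx0.
have -> : ('X%:M : 'M[{poly F}]_(1 + n)) = block_mx 'X%:M 0 0 'X%:M by exact: scalar_mx_block.
rewrite opp_block_mx add_block_mx oppr0 addr0 det_lblock det_mx11 !mxE /=.
by rewrite mulr1n.
Qed.

Lemma pow_lblock n (a : F) (C : 'M[F]_(n, 1)) (B : 'M[F]_n) k :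
  exists Ck, (block_mx a%:M 0 C B : 'M_(1 + n)) ^+ k
             = block_mx (a ^+ k)%:M 0 Ck (B ^+ k).
Proof.
elim: k => [|k [Ck IH]].
  by exists 0; rewrite !expr0 -scalar_mx_block.
exists (C *m (a ^+ k)%:M + B *m Ck).
rewrite exprS IH -mulmxE mulmx_block !mulmx0 !mul0mx !addr0.
by rewrite add0r -scalar_mxM -exprS mulmxE -exprS.
Qed.

Lemma conj_pow n (P A : 'M[F]_n) k : P \in unitmx ->
  (P *m A *m invmx P) ^+ k = P *m A ^+ k *m invmx P.
Proof.
move=> Pu; elim: k => [|k IH].
  by rewrite !expr0 mulmx1 mulmxV.
rewrite exprS IH -!mulmxE !mulmxA mulmxKV // -!mulmxA.
by rewrite [A *m (A ^+ k *m _)]mulmxA mulmxE -exprS.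
Qed.

Lemma tr_pow_split n (A : 'M[F]_n) (s : seq F) :
  char_poly A = \prod_(x <- s) ('X - x%:P) ->
  forall k, \tr (A ^+ k) = \sum_(x <- s) x ^+ k.
Proof.
elim: n A s => [|n IHn] A s hs k.
  have : size (char_poly A) = 1%N by rewrite size_char_poly.
  rewrite hs size_prod_XsubC; case: s {hs} => // _.
  by rewrite big_nil /mxtrace big_ord0.
have : size (char_poly A) = n.+2 by rewrite size_char_poly.
rewrite hs size_prod_XsubC; case: s hs => // x s' hs _.
have : eigenvalue A x.
  by rewrite eigenvalue_root_char hs big_cons rootM root_XsubC eqxx.
case/eigenvalueP => v vA vn0.
set P := row_ebase v.
have Pu : P \in unitmx by exact: row_ebase_unit.
set w := row 0 P.
have hv : col_ebase v *m w = v.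
  have r1 : \rank v = 1%N by rewrite rank_rV vn0.
  by have := mulmx_ebase v; rewrite r1 -mulmxA pid1_mul_row.
have wA : w *m A = x *: w.
  have h : col_ebase v *m (w *m A) = col_ebase v *m (x *: w).
    by rewrite mulmxA hv vA -scalemxAr hv.
  by move/(congr1 (mulmx (invmx (col_ebase v)))): h; rewrite !mulKmx ?col_ebase_unit.
set Q : 'M_(1 + n) := P *m A *m invmx P.
have rowQ : forall j, Q 0 j = x * (0 == j)%:R.
  have : row 0 Q = x *: row 0 (1%:M : 'M_n.+1).
    rewrite /Q !row_mul -/w wA -scalemxAl -row_mul mulmxV //.
  by move=> h j; move/rowP: h => /(_ j); rewrite !mxE.
have cQ : char_poly Q = char_poly A by rewrite /Q char_poly_conj.
have tQ : \tr (Q ^+ k) = \tr (A ^+ k).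
  by rewrite /Q conj_pow // mxtrace_mulC mulmxA mulVmx // mul1mx.
clearbody Q.
have hQ : Q = block_mx x%:M 0 (dlsubmx Q) (drsubmx Q).
  rewrite -{1}(submxK Q); congr block_mx.
    apply/matrixP => i j; rewrite !ord1 !mxE.
    have -> : lshift n (0 : 'I_1) = 0 by apply/val_inj.
    by rewrite rowQ eqxx mulr1.
  apply/matrixP => i j; rewrite !ord1 !mxE.
  have -> : lshift n (0 : 'I_1) = 0 by apply/val_inj.
  by rewrite rowQ; case: eqP => // h; rewrite mulr0.
have cB : char_poly (drsubmx Q) = \prod_(y <- s') ('X - y%:P).
  apply: (@mulfI _ ('X - x%:P)); first by rewrite polyXsubC_eq0.
  by rewrite -(char_poly_lblock x (dlsubmx Q)) -hQ cQ hs big_cons.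
have [Ck hk] := pow_lblock x (dlsubmx Q) (drsubmx Q) k.
rewrite -tQ hQ hk mxtrace_block (IHn _ _ cB) mxtrace_scalar big_cons.
by [].
Qed.
End PA.


Section Walks.
Variables (n : nat) (e : rel 'I_n).

Fixpoint cnt (k : nat) (i j : 'I_n) : nat :=
  match k with
  | 0 => (i == j : nat)
  | k'.+1 => \sum_(l < n) (e i l : nat) * cnt k' l j
  end.

Lemma cnt1 i j : cnt 1 i j = e i j.
Proof.
rewrite /= (bigD1 j) //= eqxx muln1 big1 ?addn0 // => l /negbTE ->.
by rewrite muln0.
Qed.

Lemma natr_R (m : nat) : (m%:R : R)%R = INR m.
Proof.
elim: m => [//|m IH]; rewrite -addn1 natrD IH plus_INR /=; reflexivity.
Qed.

Lemma adj_pow (k : nat) i j : ((adjmx e ^+ k)%R i j = (cnt k i j)%:R)%R.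
Proof.
elim: k i j => [|k IH] i j.
  by rewrite expr0 !mxE.
rewrite exprS -mulmxE mxE /= natr_sum; apply: eq_bigr => l _.
by rewrite IH !mxE natrM; case: (e i l).
Qed.


Lemma cnt0 i j : cnt 0 i j = (i == j). Proof. by []. Qed.

Lemma cnt_add a b i j : cnt (a + b) i j = \sum_(l < n) cnt a i l * cnt b l j.
Proof.
elim: a i j => [|a IH] i j.
  rewrite add0n (bigD1 i) //= eqxx mul1n big1 ?addn0 // => l /negbTE.
  by rewrite eq_sym => ->.
rewrite addSn /=.
under eq_bigr do rewrite IH big_distrr /=.
rewrite exchange_big /=; apply: eq_bigr => l _.
by rewrite big_distrl /=; apply: eq_bigr => m _; rewrite mulnA.
Qed.

Hypothesis esym : forall i j, e i j = e j i.
Hypothesis eirr : forall i, e i i = false.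

Lemma cnt_sym k i j : cnt k i j = cnt k j i.
Proof.
elim: k i j => [|k IH] i j; first by rewrite /= eq_sym.
rewrite -[in RHS]addn1 cnt_add [LHS]/=; apply: eq_bigr => l _.
by rewrite cnt1 IH esym mulnC.
Qed.

Lemma wl_mono k i j : walk_le e k i j -> walk_le e k.+1 i j.
Proof. by rewrite /= => ->. Qed.

Lemma wl_mono_le k k' i j : k <= k' -> walk_le e k i j -> walk_le e k' i j.
Proof.
move=> h; elim: k' h => [|k' IH]; first by rewrite leqn0 => /eqP ->.
rewrite leq_eqVlt => /orP [/eqP -> //|]; rewrite ltnS => h w.
exact/wl_mono/IH.
Qed.

Lemma wl_first k v w : walk_le e k.+1 v w -> w != v ->
  exists2 l, e v l & walk_le e k l w.
Proof.
elim: k v w => [|k IH] v w.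
  rewrite /= => /orP [/eqP -> |/existsP [l /andP [h1 h2]]]; first by rewrite eqxx.
  by move=> _; exists l.
move=> /orP [h|/existsP [l /andP [h1 h2]]] wv; last by exists l.
by have [l h1 h2] := IH _ _ h wv; exists l => //; exact: wl_mono.
Qed.

Definition walks k v := \sum_(w < n) cnt k v w.

Lemma walks_ball k v : 0 < k ->
  \sum_(w < n) ((w != v) && walk_le e k v w : nat) <= walks k v.
Proof.
case: k => // k _; elim: k v => [|k IH] v.
  rewrite /walks; apply: leq_sum => w _; rewrite cnt1.
  case: (boolP ((w != v) && walk_le e 1 v w)) => //= /andP [wv h].
  have [l h1 h2] := @wl_first 0 v w h wv; move: h2 => /= /eqP <-.
  by rewrite h1.
rewrite /walks.
have step : forall l, e v l ->
  \sum_(w < n) ((w != v) && walk_le e k.+1 l w : nat) <= walks k.+1 l.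
  move=> l hl; apply: leq_trans (IH l).
  have hlv : walk_le e k.+1 l v.
    apply: (@wl_mono_le 1 k.+1) => //.
    by apply/orP; right; apply/existsP; exists v; rewrite esym hl /= eqxx.
  have hll : walk_le e k.+1 l l by apply: (@wl_mono_le 0 k.+1) => //=.
  rewrite (bigD1 v) //= eqxx /= add0n.
  rewrite [X in _ <= X](bigD1 l) //= eqxx /= add0n.
  have -> : \sum_(i < n | i != v) ((i != v) && walk_le e k.+1 l i : nat)
      = \sum_(i < n) ((i != v) && walk_le e k.+1 l i : nat).
    by rewrite [RHS](bigD1 v) //= eqxx.
  have -> : \sum_(i < n | i != l) ((i != l) && walk_le e k.+1 l i : nat)
      = \sum_(i < n) ((i != l) && walk_le e k.+1 l i : nat).
    by rewrite [RHS](bigD1 l) //= eqxx.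
  have sp : forall u, walk_le e k.+1 l u ->
      \sum_(i < n) ((i != u) && walk_le e k.+1 l i : nat) + 1 =
      \sum_(i < n) (walk_le e k.+1 l i : nat).
    move=> u hu; rewrite [RHS](bigD1 u) // hu addnC; congr (_ + _).
    rewrite [RHS]big_mkcond /=; apply: eq_bigr => i _.
    by case: (i != u).
  by rewrite -(leq_add2r 1) sp // sp.
have -> : \sum_(w < n) cnt k.+2 v w = \sum_(l < n) (e v l : nat) * walks k.+1 l.
  rewrite /walks /=; rewrite exchange_big /=; apply: eq_bigr => l _.
  by rewrite big_distrr.
apply: (@leq_trans (\sum_(l < n) (e v l : nat) *
     \sum_(w < n) ((w != v) && walk_le e k.+1 l w : nat))); last first.
  apply: leq_sum => l _; case: (boolP (e v l)) => hl; last by rewrite !mul0n.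
  by rewrite !mul1n step.
rewrite [X in _ <= X](eq_bigr (fun l => \sum_(w < n) (e v l : nat) *
   ((w != v) && walk_le e k.+1 l w))); last by move=> l _; rewrite big_distrr.
rewrite [X in _ <= X]exchange_big /=; apply: leq_sum => w _.
case: (boolP ((w != v) && walk_le e k.+2 v w)) => // /andP [wv h].
have [l h1 h2] := wl_first h wv.
rewrite (bigD1 l) // h1 wv; move: h2 => /= ->; exact: leq_addr.
Qed.

Lemma path_wl p v : path e v p -> walk_le e (size p) v (last v p).
Proof.
elim: p v => [|a p IH] v /=; first by rewrite eqxx.
move=> /andP [h1 h2]; apply/orP; right; apply/existsP; exists a.
by rewrite h1 IH.
Qed.

Lemma conn_wl i j : connect e i j -> exists2 k, k < n & walk_le e k i j.
Proof.
move/connectP => [p hp ->]; case/shortenP: hp => p' hp' hu _.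
exists (size p'); last exact: path_wl.
have := max_card (mem (i :: p')); rewrite (card_uniqP hu) card_ord /=.
by [].
Qed.

Hypothesis hconn : forall i j, connect e i j.

Lemma gdist_wl i j : walk_le e (gdist e i j) i j.
Proof.
have [k kn hk] := conn_wl (hconn i j).
have hh : has (fun k => walk_le e k i j) (iota 0 n).
  by apply/hasP; exists k; rewrite // mem_iota.
have := nth_find 0 hh; rewrite nth_iota ?add0n //.
by move: hh; rewrite has_find size_iota.
Qed.

Lemma gdist_le_diam i j : gdist e i j <= diameter e.
Proof.
rewrite /diameter; apply: leq_trans (leq_bigmax i).
exact: (leq_bigmax (F := fun j => gdist e i j) j).
Qed.

Lemma diam_wl i j : walk_le e (diameter e) i j.
Proof. exact: (wl_mono_le (gdist_le_diam i j) (gdist_wl i j)). Qed.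

Hypothesis n2 : 1 < n.

Lemma diam_pos : 0 < diameter e.
Proof.
have h0 : 0 < n by apply: ltn_trans n2.
pose i0 := Ordinal h0; pose i1 := Ordinal n2.
apply: leq_trans (gdist_le_diam i0 i1).
rewrite lt0n; apply/negP => /eqP h.
by have := gdist_wl i0 i1; rewrite h /=.
Qed.

Lemma walks_D v : n.-1 <= walks (diameter e) v.
Proof.
apply: leq_trans (walks_ball v diam_pos).
rewrite (eq_bigr (fun w => (w != v : nat))); last by move=> w _; rewrite diam_wl andbT.
rewrite (bigD1 v) //= eqxx add0n.
rewrite (eq_bigr (fun _ => 1%N)); last by move=> w ->.
by rewrite sum1_card cardC1 card_ord.
Qed.

Lemma walks_jD j v : (n.-1) ^ j <= walks (j * diameter e) v.
Proof.
elim: j v => [|j IH] v.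
  by rewrite /walks mul0n (bigD1 v) //= eqxx.
rewrite mulSn /walks.
under eq_bigr do rewrite cnt_add.
rewrite exchange_big /=.
under eq_bigr do rewrite -big_distrr /=.
apply: (@leq_trans (\sum_(l < n) cnt (diameter e) v l * (n.-1) ^ j)).
  rewrite -big_distrl /= expnS [X in X <= _]mulnC [X in _ <= X]mulnC leq_mul2l; apply/orP; right; exact: walks_D.
by apply: leq_sum => l _; rewrite leq_mul2l IH orbT.
Qed.

Definition T k := \sum_(v < n) cnt k v v.

Lemma T1 : T 1 = 0.
Proof. by rewrite /T big1 // => v _; rewrite cnt1 eirr. Qed.

Lemma T_bound j : ((n.-1) ^ j) ^ 2 <= n ^ 2 * T (j * diameter e + j * diameter e).
Proof.
have h0 : 0 < n by apply: ltn_trans n2.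
pose v0 := Ordinal h0.
set m := j * diameter e.
pose x w := cnt m v0 w.
case: (@arg_maxnP _ v0 predT x isT) => ws _ hws.
have h1 : (n.-1) ^ j <= n * x ws.
  apply: leq_trans (walks_jD j v0) _.
  rewrite /walks -/m (@leq_trans (\sum_(w < n) x ws)) //.
    by apply: leq_sum => w _; exact: hws.
  by rewrite sum_nat_const card_ord.
apply: (@leq_trans ((n * x ws) ^ 2)); first by rewrite leq_exp2r.
rewrite expnMn leq_mul2l; apply/orP; right.
apply: (@leq_trans (cnt (m + m) v0 v0)); last first.
  by rewrite /T (bigD1 v0) //= leq_addr.
rewrite cnt_add (bigD1 ws) //= [cnt m ws v0]cnt_sym.
apply: leq_trans (leq_addr _ _); by rewrite /x expnS expn1.
Qed.

Lemma tr_T k : (\tr (adjmx e ^+ k) = (T k)%:R :> R)%R.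
Proof.
rewrite /mxtrace /T natr_sum; apply: eq_bigr => v _.
by rewrite adj_pow.
Qed.

End Walks.

Open Scope R_scope.
Unset Implicit Arguments.

Definition rsum (f : R -> R) (l : seq R) : R := (\sum_(x <- l) f x)%R.

Lemma rsum_nil f : rsum f [::] = 0.
Proof. by rewrite /rsum big_nil. Qed.

Lemma rsum_cons f a l : rsum f (a :: l) = f a + rsum f l.
Proof. by rewrite /rsum big_cons. Qed.

Lemma rsum_le f g l : (forall x, x \in l -> f x <= g x) -> rsum f l <= rsum g l.
Proof.
elim: l => [|a l IH] h; first by rewrite !rsum_nil; lra.
rewrite !rsum_cons; apply: Rplus_le_compat.
  by apply: h; rewrite mem_head.
by apply: IH => x hx; apply: h; rewrite in_cons hx orbT.
Qed.

Lemma rsum_lt f g l : (forall x, x \in l -> f x <= g x) ->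
  (exists2 x, x \in l & f x < g x) -> rsum f l < rsum g l.
Proof.
elim: l => [|a l IH] h [x hx hlt]; first by [].
rewrite !rsum_cons; move: hx; rewrite in_cons => /orP [/eqP xa|hx].
  subst x; apply: Rplus_lt_le_compat => //.
  by apply: (rsum_le _ _ _) => y hy; apply: h; rewrite in_cons hy orbT.
apply: Rplus_le_lt_compat; first by apply: h; rewrite mem_head.
apply: IH; last by exists x.
by move=> y hy; apply: h; rewrite in_cons hy orbT.
Qed.

Lemma rsum_const c l : rsum (fun _ => c) l = INR (size l) * c.
Proof.
elim: l => [|a l IH]; first by rewrite rsum_nil /=; lra.
rewrite rsum_cons IH; change (size (a :: l)) with (size l).+1; rewrite S_INR; lra.
Qed.

Lemma rsum_plus f g l : rsum (fun x => f x + g x) l = rsum f l + rsum g l.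
Proof.
elim: l => [|a l IH]; first by rewrite !rsum_nil; lra.
rewrite !rsum_cons IH; lra.
Qed.

Lemma rsum_perm f l1 l2 : perm_eq l1 l2 -> rsum f l1 = rsum f l2.
Proof. by move=> h; rewrite /rsum (perm_big _ h). Qed.

Lemma expr_pow (x : R) k : (x ^+ k)%R = x ^ k.
Proof. elim: k => [//|k IH]; rewrite exprS IH /=; reflexivity. Qed.

Lemma list_max (l : seq R) : l != [::] ->
  exists2 m, m \in l & forall x, x \in l -> x <= m.
Proof.
elim: l => [//|a l IH] _.
case: (eqVneq l [::]) => [->|ln0].
  by exists a; rewrite ?mem_head // => x; rewrite inE => /eqP ->; lra.
have [m hm hmax] := IH ln0.
case: (Rle_lt_dec a m) => ham.
  exists m; first by rewrite in_cons hm orbT.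
  by move=> x; rewrite in_cons => /orP [/eqP ->|/hmax].
exists a; first by rewrite mem_head.
move=> x; rewrite in_cons => /orP [/eqP ->|/hmax]; lra.
Qed.

Lemma bernoulli r j : 0 <= r -> 1 + INR j * r <= (1 + r) ^ j.
Proof.
move=> hr; elim: j => [|j IH]; first by rewrite /=; lra.
rewrite S_INR /=.
have h1 : 0 <= INR j * r by apply: Rmult_le_pos => //; apply: pos_INR.
nra.
Qed.

Lemma growth a b c d : 0 <= b -> b < a -> 0 < c ->
  (forall j, c * a ^ j <= d * b ^ j) -> False.
Proof.
move=> hb hab hc h.
case: (Req_dec b 0) => [b0|bn0].
  have := h 1%N; rewrite b0 /=; nra.
have bp : 0 < b by lra.
set r := a / b - 1.
have rp : 0 < r.
  rewrite /r; apply: Rlt_Rminus; apply/(Rmult_lt_reg_r b) => //.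
  rewrite /Rdiv Rmult_assoc Rinv_l; lra.
have ha : a = b * (1 + r) by rewrite /r; field; lra.
have [j hj] := INR_unbounded (d / (c * r)).
have := h j; rewrite ha Rpow_mult_distr.
have hbj : 0 < b ^ j by apply: pow_lt.
have := bernoulli r j (Rlt_le _ _ rp).
have hj' : d < INR j * (c * r).
  have := Rmult_lt_compat_r (c * r) _ _ (Rmult_lt_0_compat _ _ hc rp) hj.
  rewrite /Rdiv Rmult_assoc Rinv_l; first by lra.
  by apply: Rgt_not_eq; apply: Rmult_lt_0_compat.
move=> hb1 hh.
have : c * (1 + INR j * r) <= d.
  apply: (Rmult_le_reg_r (b ^ j)) => //.
  apply: Rle_trans hh.
  have := Rmult_le_compat_l (c * b ^ j) _ _ (Rlt_le _ _ (Rmult_lt_0_compat _ _ hc hbj)) hb1.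
  nra.
nra.
Qed.

Lemma rsum_ext f g l : (forall x, f x = g x) -> rsum f l = rsum g l.
Proof. by move=> h; rewrite /rsum; apply: eq_bigr => x _; rewrite h. Qed.

Lemma pow_odd y j : y ^ (2 * j).+1 = y * (y ^ 2) ^ j.
Proof. by rewrite /= pow_mult. Qed.

Lemma pow_odd_le y m j : y <= m -> 0 <= m -> y ^ (2 * j).+1 <= m * (m ^ 2) ^ j.
Proof.
move=> hym hm.
case: (Rle_lt_dec 0 y) => hy.
  by rewrite -pow_odd; apply: pow_incr; lra.
rewrite pow_odd.
have h1 : 0 <= (y ^ 2) ^ j by apply: pow_le; nra.
have h2 : 0 <= m ^ (2 * j).+1 by apply: pow_le.
rewrite pow_odd in h2.
have h3 : y * (y ^ 2) ^ j <= 0 * (y ^ 2) ^ j by apply: Rmult_le_compat_r => //; lra.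
lra.
Qed.

Lemma INR_expn m k : INR (m ^ k)%N = INR m ^ k.
Proof. elim: k => [//|k IH]; by rewrite expnS mult_INR IH. Qed.

Lemma final_real (lam : seq R) (n D : nat) (T : nat -> nat) :
  (1 < n)%N -> (0 < D)%N -> size lam = n ->
  (forall k, rsum (fun x => x ^ k) lam = INR (T k)) ->
  T 1%N = 0%N ->
  (forall j, (((n.-1) ^ j) ^ 2 <= n ^ 2 * T (j * D + j * D))%N) ->
  exp (Rpower (INR n.-1) (/ INR D)) + INR n.-1 - Rpower (INR n.-1) (/ INR D)
  < rsum exp lam.
Proof.
move=> n2 D0 hsz hS hT1 hB.
have ln0 : lam != [::] by rewrite -size_eq0 hsz; apply/eqP => h; rewrite h in n2.
have [mu hmu hmax] := list_max lam ln0.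
set rest := rem mu lam.
have hp : perm_eq lam (mu :: rest) by apply: perm_to_rem.
have hsr : size rest = n.-1 by rewrite size_rem // hsz.
have hn1 : 1 <= INR n.-1.
  have h : (1 <= n.-1)%N by case: (n) n2 => [|[|k]].
  by have := le_INR 1 _ (elimT leP h).
have hn : INR n = INR n.-1 + 1 by rewrite -S_INR prednK // (ltn_trans _ n2).
have hid : rsum (fun x => x) lam = 0.
  by rewrite -(rsum_ext _ _ lam (fun x => pow_1 x)) hS hT1.
have hmu0 : 0 <= mu.
  have := rsum_le (fun x => x) (fun _ => mu) lam hmax.
  rewrite hid rsum_const hsz => h.
  apply: (Rmult_le_reg_l (INR n)); nra.
have hper : forall x, x \in lam -> - x <= mu.
  move=> x hx; apply: Rnot_lt_le => hlt.
  have hpx : perm_eq lam (x :: rem x lam) by apply: perm_to_rem.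
  apply: (growth (x ^ 2) (mu ^ 2) (- x) (INR n.-1 * mu)); first by nra.
  - by nra.
  - by lra.
  move=> j.
  have h0 : 0 <= rsum (fun y => y ^ (2 * j).+1) lam by rewrite hS; apply: pos_INR.
  rewrite (rsum_perm _ _ _ hpx) rsum_cons pow_odd in h0.
  have h1 : rsum (fun y => y ^ (2 * j).+1) (rem x lam)
            <= rsum (fun _ => mu * (mu ^ 2) ^ j) (rem x lam).
    apply: (rsum_le _ _ _) => y hy; apply: pow_odd_le => //.
    by apply: hmax; apply: (mem_rem hy).
  rewrite rsum_const size_rem // hsz in h1.
  lra.
have hsq : forall x, x \in lam -> x ^ 2 <= mu ^ 2.
  by move=> x hx; have := hmax x hx; have := hper x hx; nra.
have hmuD : INR n.-1 <= mu ^ D.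
  have hD0 : 0 <= mu ^ D by apply: pow_le.
  apply: Rnot_lt_le => hlt.
  apply: (growth (INR n.-1 ^ 2) ((mu ^ D) ^ 2) 1 (INR n ^ 3)); first by nra.
  - by nra.
  - by lra.
  move=> j.
  have := hB j; move/leP/le_INR; rewrite !INR_expn mult_INR INR_expn -hS => h.
  have h2 : rsum (fun x => x ^ (j * D + j * D)) lam <= rsum (fun _ => (mu ^ 2) ^ (j * D)) lam.
    apply: (rsum_le _ _ _) => x hx.
    have -> : x ^ (j * D + j * D) = (x ^ 2) ^ (j * D).
      by rewrite -pow_mult; congr (_ ^ _); lia.
    by apply: pow_incr; split; [nra | apply: hsq].
  rewrite rsum_const hsz in h2.
  have e1 : (INR n.-1 ^ j) ^ 2 = (INR n.-1 ^ 2) ^ j.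
    by rewrite -!pow_mult; congr (_ ^ _); lia.
  have e2 : (mu ^ 2) ^ (j * D) = ((mu ^ D) ^ 2) ^ j.
    by rewrite -!pow_mult; congr (_ ^ _); lia.
  rewrite e1 in h; rewrite e2 in h2.
  have hn0 : 0 <= INR n ^ 2 by apply: pow_le; apply: pos_INR.
  have := Rmult_le_compat_l _ _ _ hn0 h2.
  have -> : INR n ^ 3 = INR n ^ 2 * INR n by ring.
  lra.
have hmup : 0 < mu.
  case: (Req_dec mu 0) => [m0|]; last by lra.
  by rewrite m0 pow_i in hmuD; [lra | apply/ltP].
set c0 := Rpower (INR n.-1) (/ INR D).
have hc0 : c0 <= mu.
  have hDp : 0 < INR D by apply: lt_0_INR; apply/ltP.
  have := Rle_Rpower_l (INR n.-1) (mu ^ D) (/ INR D) (Rlt_le _ _ (Rinv_0_lt_compat _ hDp)).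
  rewrite -Rpower_pow // Rpower_mult Rinv_r ?Rpower_1 //; last by lra.
  by move=> h; apply: h; split; [lra | rewrite Rpower_pow].

have hc00 : 0 <= c0 by rewrite /c0 /Rpower; apply: Rlt_le; apply: exp_pos.
have hrid : rsum (fun x => x) rest = - mu.
  by move: hid; rewrite (rsum_perm _ _ _ hp) rsum_cons; lra.
have hstrict : rsum (fun x => 1 + x) rest < rsum exp rest.
  apply: (rsum_lt _ _ _) => [x _|]; first by apply: exp_ineq1_le.
  case: (boolP (has (fun x => x != 0) rest)) => [/hasP [x hx /eqP xn0]|hnn].
    by exists x => //; apply: exp_ineq1.
  exfalso.
  have : rsum (fun _ => 0) rest <= rsum (fun x => x) rest.
    apply: (rsum_le _ _ _) => x hx.
    by have := hasPn hnn x hx; rewrite negbK => /eqP ->; lra.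
  by rewrite rsum_const hrid => h; lra.
rewrite rsum_plus rsum_const hrid hsr in hstrict.
rewrite (rsum_perm _ _ _ hp) rsum_cons.
have hexp : exp c0 - c0 <= exp mu - mu.
  have em : exp mu = exp c0 * exp (mu - c0) by rewrite -exp_plus Rplus_minus.
  have h1 := exp_ineq1_le c0.
  have h2 := exp_ineq1_le (mu - c0).
  nra.
lra.
Qed.

Theorem mainTheorem4 (n : nat) (e : rel 'I_n) (lam : seq R) :
  (2 <= n)%N ->
  simple_graph e ->
  connected_graph e ->
  adj_spectrum e lam ->
  exp (Rpower (INR n.-1) (/ INR (diameter e))) + INR n.-1
    - Rpower (INR n.-1) (/ INR (diameter e))
  < estrada lam.
Proof.
move=> n2 [esym eirr] hconn hspec.
have htr := tr_pow_split hspec.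
have hsz : size lam = n.
  have := size_char_poly (adjmx e); rewrite hspec size_prod_XsubC.
  by case.
have hS : forall k, rsum (fun x => x ^ k) lam = INR (T e k).
  move=> k; rewrite -natr_R -tr_T htr.
  by rewrite /rsum; apply: eq_bigr => x _; rewrite expr_pow.
exact: (final_real lam n (diameter e) (T e) n2 (diam_pos hconn n2) hsz hS
          (T1 eirr) (T_bound esym hconn n2)).
Qed.
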